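(* Let $m\ge0$ and let $\alpha=(\alpha_0,\dots,\alpha_{2m+5})\in\mathbb{R}^{2m+6}$ satisfy \[ -\tfrac12\le\alpha_0\le0,\quad\alpha_1=-\alpha_0,\quad\alpha_2\le\alpha_3\le\dots\le\alpha_{2m+5}\le\alpha_2+1,\quad\sum_{r=2}^{2m+5}\alpha_r=m+1 . \] Let \[ E(\alpha)=-2\alpha_0+\sum_{r\ge2:\alpha_r\le\alpha_0}2\alpha_0+\sum_{r\ge2:\alpha_0<\alpha_r<-\alpha_0}(\alpha_0+\alpha_r)+\sum_{r\ge2:1+\alpha_0<\alpha_r<1-\alpha_0}(\alpha_r-1-\alpha_0)+\sum_{r\ge2:\alpha_r\ge1-\alpha_0}(-2\alpha_0), \] all sums being over $2\le r\le 2m+5$. Write $A=\#\{r\ge2:\alpha_r<-\alpha_0\}$ and $B=\#\{r\ge2:\alpha_r>1+\alpha_0\}$. Then $E(\alpha)=0$ if and only if one of the following holds: (1) $\alpha_0=0$ or $\alpha_0=-\frac12$; (2) $\alpha_2\le\alpha_0$ and $-\alpha_0\le\alpha_r\le1+\alpha_0$ for all $r\ge3$; (3) $\alpha_0<\alpha_r<1-\alpha_0$ for all $r\ge2$, $2\le A\le m+3$, $B\le m+1$, and \[ \sum_{r\ge2:-\alpha_0\le\alpha_r\le1+\alpha_0}\alpha_r=(m+1-B)+(A-2-B)\alpha_0 . \] Moreover, for each choice of $A$, $B$ and $\alpha_0$ (as in (3)) there exist values of $\alpha_r$ ($r\ge2$) solving this equation; if $A=m+3$ then $\alpha_r=1+\alpha_0$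 for all $r$ with $-\alpha_0\le\alpha_r\le1+\alpha_0$, and if $B=m+1$ then $\alpha_r=-\alpha_0$ for all $r$ with $-\alpha_0\le\alpha_r\le1+\alpha_0$. *)

(* Defs.v *)
From HB Require Import structures.
From mathcomp Require Import all_boot all_order all_algebra.
Set Implicit Arguments. Unset Strict Implicit. Unset Printing Implicit Defensive.
Import Order.TTheory GRing.Theory Num.Theory.
Local Open Scope ring_scope.

(* alpha = (alpha_0, ..., alpha_{2m+5}) is encoded as a : nat -> R,
   only the values at indices 0 .. 2m+5 matter. *)

Definition admissible (R : realFieldType) (m : nat) (a : nat -> R) : Prop :=
  - 2^-1 <= a 0%N /\ a 0%N <= 0 /\ a 1%N = - a 0%N /\
  (forall r : nat, (2 <= r)%N -> (r < (m.*2 + 5))%N -> a r <= a r.+1) /\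
  a (m.*2 + 5)%N <= a 2%N + 1 /\
  \sum_(2 <= r < m.*2 + 6) a r = m.+1%:R.

Definition Efun (R : realFieldType) (m : nat) (a : nat -> R) : R :=
  - 2 * a 0%N
  + \sum_(2 <= r < m.*2 + 6 | a r <= a 0%N) (2 * a 0%N)
  + \sum_(2 <= r < m.*2 + 6 | (a 0%N < a r) && (a r < - a 0%N)) (a 0%N + a r)
  + \sum_(2 <= r < m.*2 + 6 | (1 + a 0%N < a r) && (a r < 1 - a 0%N))
        (a r - 1 - a 0%N)
  + \sum_(2 <= r < m.*2 + 6 | 1 - a 0%N <= a r) (- 2 * a 0%N).

Definition cntA (R : realFieldType) (m : nat) (a : nat -> R) : nat :=
  \sum_(2 <= r < m.*2 + 6 | a r < - a 0%N) 1%N.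

Definition cntB (R : realFieldType) (m : nat) (a : nat -> R) : nat :=
  \sum_(2 <= r < m.*2 + 6 | 1 + a 0%N < a r) 1%N.

Definition middle (R : realFieldType) (a : nat -> R) (r : nat) : bool :=
  (- a 0%N <= a r) && (a r <= 1 + a 0%N).

Definition cond1 (R : realFieldType) (m : nat) (a : nat -> R) : Prop :=
  a 0%N = 0 \/ a 0%N = - 2^-1.

Definition cond2 (R : realFieldType) (m : nat) (a : nat -> R) : Prop :=
  a 2%N <= a 0%N /\
  (forall r : nat, (3 <= r)%N -> (r < m.*2 + 6)%N ->
     - a 0%N <= a r /\ a r <= 1 + a 0%N).

Definition cond3 (R : realFieldType) (m : nat) (a : nat -> R) : Prop :=
  [/\ (forall r : nat, (2 <= r)%N -> (r < m.*2 + 6)%N ->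
         a 0%N < a r /\ a r < 1 - a 0%N),
      (2 <= cntA m a <= m + 3)%N,
      (cntB m a <= m + 1)%N &
      \sum_(2 <= r < m.*2 + 6 | middle a r) a r
        = (m.+1 - cntB m a)%N%:R
          + ((cntA m a)%:R - 2 - (cntB m a)%:R) * a 0%N].

(* Main.v *)
Require Import Defs.
From HB Require Import structures.
From mathcomp Require Import all_boot all_order all_algebra.
From mathcomp Require Import zify ring lra.
Import Order.TTheory GRing.Theory Num.Theory.
Set Implicit Arguments. Unset Strict Implicit. Unset Printing Implicit Defensive.
Local Open Scope ring_scope.


Definition fE (R : realFieldType) (a0 x : R) : R :=
  (if x <= a0 then 2 * a0 else 0)
  + (if (a0 < x) && (x < - a0) then a0 + x else 0)
  + (if (1 + a0 < x) && (x < 1 - a0) then x - 1 - a0 else 0)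
  + (if 1 - a0 <= x then - 2 * a0 else 0).
Definition lowi (R : realFieldType) (a0 x : R) : R := if x < - a0 then 1 else 0.
Definition highi (R : realFieldType) (a0 x : R) : R := if 1 + a0 < x then 1 else 0.
Definition midv (R : realFieldType) (a0 x : R) : R :=
  if (- a0 <= x) && (x <= 1 + a0) then x else 0.

Lemma E_eq (R : realFieldType) m (a : nat -> R) :
  Efun m a = - 2 * a 0%N + \sum_(2 <= r < m.*2 + 6) fE (a 0%N) (a r).
Proof.
rewrite /Efun /fE.
rewrite [in RHS]big_split /= [in RHS]big_split /= [in RHS]big_split /=.
by rewrite -!big_mkcond /= !addrA.
Qed.

Lemma A_eq (R : realFieldType) m (a : nat -> R) :
  (cntA m a)%:R = \sum_(2 <= r < m.*2 + 6) lowi (a 0%N) (a r).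
Proof. by rewrite /cntA natr_sum big_mkcond. Qed.
Lemma B_eq (R : realFieldType) m (a : nat -> R) :
  (cntB m a)%:R = \sum_(2 <= r < m.*2 + 6) highi (a 0%N) (a r).
Proof. by rewrite /cntB natr_sum big_mkcond. Qed.
Lemma M_eq (R : realFieldType) m (a : nat -> R) :
  \sum_(2 <= r < m.*2 + 6 | middle a r) a r = \sum_(2 <= r < m.*2 + 6) midv (a 0%N) (a r).
Proof. by rewrite big_mkcond. Qed.

Ltac splitx x a0 :=
  case: (lerP x a0) => ?; case: (ltrP x (-a0)) => ?;
  case: (lerP x (1 + a0)) => ?; case: (ltrP x (1 - a0)) => ?;
  rewrite /= ?andbT ?andbF ?andTb ?andFb /=; try lra.

Lemma fE_ident (R : realFieldType) (a0 x : R) : - 2^-1 <= a0 -> a0 <= 0 ->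
  a0 < x -> x < 1 - a0 ->
  fE a0 x = x - midv a0 x + lowi a0 x * a0 - highi a0 x * (1 + a0).
Proof.
move=> h1 h2 h3 h4.
rewrite /fE /midv /lowi /highi; splitx x a0.
Qed.

Lemma fE_lowcase (R : realFieldType) (a0 x : R) : a0 < 0 -> x <= 1 + a0 ->
  fE a0 x <= 0 /\ (fE a0 x = 0 -> - a0 <= x).
Proof. move=> h1 h2; rewrite /fE; splitx x a0; split; lra. Qed.

Lemma fE_highcase (R : realFieldType) (a0 x : R) : a0 <= 0 -> - a0 <= x ->
  0 <= fE a0 x.
Proof. move=> h1 h2; rewrite /fE; splitx x a0. Qed.

Lemma fE_first (R : realFieldType) (a0 x : R) : a0 <= 0 -> x <= a0 ->
  fE a0 x = 2 * a0.
Proof. move=> h1 h2; rewrite /fE; splitx x a0. Qed.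

Lemma fE_mid0 (R : realFieldType) (a0 x : R) : a0 <= 0 -> - a0 <= x -> x <= 1 + a0 ->
  fE a0 x = 0.
Proof. move=> h1 h2 h3; rewrite /fE; splitx x a0. Qed.

Lemma fE_zero (R : realFieldType) (x : R) : fE 0 x = 0.
Proof. rewrite /fE; splitx x (0:R). Qed.

Lemma fE_half (R : realFieldType) (a0 x : R) : a0 = - 2^-1 -> a0 <= x -> x <= 1 - a0 ->
  fE a0 x = x + a0.
Proof. move=> h1 h2 h3; rewrite /fE; splitx x a0. Qed.

Lemma fE_lb (R : realFieldType) (a0 x : R) : - 2^-1 <= a0 -> a0 <= 0 ->
  a0 < x -> x < 1 - a0 ->
  x - (1 + a0) + lowi a0 x * (1 + 2 * a0) <= fE a0 x.
Proof. move=> h1 h2 h3 h4; rewrite /fE /lowi; splitx x a0. Qed.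

Lemma fE_ub (R : realFieldType) (a0 x : R) : - 2^-1 <= a0 -> a0 <= 0 ->
  a0 < x -> x < 1 - a0 ->
  fE a0 x <= x + a0 - highi a0 x * (1 + 2 * a0).
Proof. move=> h1 h2 h3 h4; rewrite /fE /highi; splitx x a0. Qed.

Lemma fE_lb2 (R : realFieldType) (a0 x : R) : - 2^-1 <= a0 -> a0 <= 0 ->
  a0 < x -> x < 1 - a0 ->
  lowi a0 x * (x - a0) + lowi a0 x * (2 * a0) <= fE a0 x.
Proof. move=> h1 h2 h3 h4; rewrite /fE /lowi; splitx x a0. Qed.

Lemma partition3 (R : realFieldType) (a0 x : R) : - 2^-1 <= a0 ->
  lowi a0 x + highi a0 x + (if (- a0 <= x) && (x <= 1 + a0) then 1 else 0) = 1.
Proof. move=> h1; rewrite /lowi /highi; splitx x a0. Qed.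


Lemma psum0 (R : numDomainType) lo hi (F : nat -> R) :
  (forall r, (lo <= r < hi)%N -> 0 <= F r) -> \sum_(lo <= r < hi) F r = 0 ->
  forall r, (lo <= r < hi)%N -> F r = 0.
Proof.
move=> h0 hs r hr.
have := hs; rewrite big_seq_cond => /eqP; rewrite psumr_eq0.
  move=> /allP /(_ r); rewrite mem_index_iota hr /= => /(_ isT) /eqP; done.
by move=> i; rewrite andbT mem_index_iota; apply: h0.
Qed.

Lemma mono (R : realFieldType) m (a : nat -> R) : admissible m a ->
  forall i j, (2 <= i)%N -> (i <= j)%N -> (j <= m.*2 + 5)%N -> a i <= a j.
Proof.
move=> [_ [_ [_ [hs _]]]] i j hi; elim: j => [|j IH] hij hj.
  exfalso; lia.
case: (ltngtP i j.+1) => h; [|lia|by rewrite h].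
apply: le_trans (IH _ _) (hs _ _ _); lia.
Qed.

Lemma sum_ge0_nat (R : numDomainType) lo hi (F : nat -> R) :
  (forall r, (lo <= r)%N -> (r < hi)%N -> 0 <= F r) -> 0 <= \sum_(lo <= r < hi) F r.
Proof.
move=> h; rewrite big_seq_cond; apply: sumr_ge0 => r.
by rewrite andbT mem_index_iota => /andP [? ?]; apply: h.
Qed.

Lemma l26 m : (2 < m.*2 + 6)%N. Proof. lia. Qed.
Lemma l25 m : (2 <= m.*2 + 5)%N. Proof. lia. Qed.
Lemma lN5 m r : (r < m.*2 + 6)%N -> (r <= m.*2 + 5)%N. Proof. lia. Qed.
Lemma l56 m r : (r < m.*2 + 5)%N -> (r < m.*2 + 6)%N. Proof. lia. Qed.

Lemma l63 m : (m.*2 + 6 - 3 = 2 * m + 3)%N. Proof. lia. Qed.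
Lemma l52 m : (m.*2 + 5 - 2 = 2 * m + 3)%N. Proof. lia. Qed.

Lemma natN (R : realFieldType) m : ((m.*2 + 6 - 2)%N)%:R = 2 * m%:R + 4 :> R.
Proof.
have -> : (m.*2 + 6 - 2 = 2 * m + 4)%N by lia.
by rewrite natrD natrM.
Qed.

Lemma key_ident (R : realFieldType) m (a : nat -> R) : admissible m a ->
  (forall r, (2 <= r)%N -> (r < m.*2 + 6)%N -> a 0%N < a r /\ a r < 1 - a 0%N) ->
  Efun m a = - 2 * a 0%N + m.+1%:R - \sum_(2 <= r < m.*2 + 6) midv (a 0%N) (a r)
    + (\sum_(2 <= r < m.*2 + 6) lowi (a 0%N) (a r)) * a 0%N
    - (\sum_(2 <= r < m.*2 + 6) highi (a 0%N) (a r)) * (1 + a 0%N).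
Proof.
move=> ha hr; have [h1 [h2 [_ [_ [_ hsum]]]]] := ha.
rewrite E_eq -hsum -!addrA; congr (_ + _).
rewrite !mulr_suml !addrA -sumrB -big_split -sumrB /=.
apply: eq_big_nat => r /andP [r2 rN]; have [h3 h4] := hr r r2 rN.
by rewrite fE_ident.
Qed.

Lemma sum_lin (R : realFieldType) m (a : nat -> R) (c d : R) (G : nat -> R) :
  \sum_(2 <= r < m.*2 + 6) (a r + c + G r * d) =
  \sum_(2 <= r < m.*2 + 6) a r + c * (2 * m%:R + 4) + (\sum_(2 <= r < m.*2 + 6) G r) * d.
Proof.
rewrite !big_split /= sumr_const_nat mulr_suml; congr (_ + _ + _).
by rewrite -[LHS]mulr_natr natN.
Qed.

Lemma part_fwd (R : realFieldType) m (a : nat -> R) : admissible m a ->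
  Efun m a = 0 -> cond1 m a \/ cond2 m a \/ cond3 m a.
Proof.
move=> ha hE; have [h1 [h2 [h3 [hs [hmax hsum]]]]] := ha.
have hm := mono ha.
have k0 : 0 <= m%:R :> R by apply: ler0n.
set a0 := a 0%N in h1 h2 h3 hmax hsum hE *.
case: (eqVneq a0 0) => [e|n0]; first by left; left.
case: (eqVneq a0 (- 2^-1)) => [e|n1]; first by left; right.
have l0 : a0 < 0 by rewrite lt_neqAle n0 h2.
have l0w : a0 <= 0 := ltW l0.
have l1 : - 2^-1 < a0 by rewrite lt_neqAle eq_sym n1 h1.
have hlo r : (2 <= r)%N -> (r < m.*2 + 6)%N -> a 2%N <= a r.
  move=> r2 rN; apply: hm => //; exact: lN5.
have hhi r : (2 <= r)%N -> (r < m.*2 + 6)%N -> a r <= a (m.*2 + 5)%N.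
  move=> r2 rN; apply: hm => //; exact: lN5.
case: (lerP (a 2%N) a0) => h20.
  right; left; split => //.
  have hE2 := hE; rewrite E_eq (big_ltn (l26 m)) -/a0 in hE2.
  have hf2 := fE_first l0w h20. rewrite hf2 in hE2.
  have hs3 : \sum_(3 <= r < m.*2 + 6) - fE a0 (a r) = 0.
    by rewrite sumrN; apply/eqP; rewrite oppr_eq0; apply/eqP; lra.
  move=> r r3 rN.
  have hb : a r <= 1 + a0.
    have := hhi r (ltnW r3) rN; lra.
  have [_ hz] := fE_lowcase l0 hb; split => //; apply: hz.
  apply/eqP; rewrite -oppr_eq0; apply/eqP.
  apply: (psum0 _ hs3); last by rewrite r3 rN.
  move=> i /andP [i3 iN]; rewrite oppr_ge0.
  have hb' : a i <= 1 + a0 by have := hhi i (ltnW i3) iN; lra.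
  by have [] := fE_lowcase l0 hb'.
case: (ltrP (a (m.*2 + 5)%N) (1 - a0)) => hM; last first.
  exfalso.
  have : 0 <= \sum_(2 <= r < m.*2 + 6) fE a0 (a r).
    apply: sum_ge0_nat => r r2 rN; apply: fE_highcase; first lra.
    have := hlo r r2 rN; lra.
  rewrite E_eq -/a0 in hE; lra.
have hin r : (2 <= r)%N -> (r < m.*2 + 6)%N -> a0 < a r /\ a r < 1 - a0.
  move=> r2 rN; have := hlo r r2 rN; have := hhi r r2 rN; move=> ? ?; split; lra.
right; right.
have hK := key_ident ha hin; rewrite hE -/a0 in hK.
have hA := A_eq m a; have hB := B_eq m a; rewrite -/a0 in hA hB.
set A := cntA m a in hA *; set B := cntB m a in hB *.
have hm1 : m.+1%:R = m%:R + 1 :> R by rewrite -addn1 natrD.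
have hE' := hE; rewrite E_eq -/a0 in hE'.
have hAub : (A <= m + 3)%N.
  have : \sum_(2 <= r < m.*2 + 6) (a r + - (1 + a0) + lowi a0 (a r) * (1 + 2 * a0))
      <= \sum_(2 <= r < m.*2 + 6) fE a0 (a r).
    apply: ler_sum_nat => r /andP [r2 rN]; have [? ?] := hin r r2 rN.
    by apply: fE_lb.
  rewrite sum_lin hsum -hA => hle.
  rewrite leqNgt; apply/negP => hlt.
  have : (m + 4)%:R <= A%:R :> R by rewrite ler_nat (addnS m 3).
  rewrite natrD => h4; nra.
have hBub : (B <= m + 1)%N.
  have : \sum_(2 <= r < m.*2 + 6) fE a0 (a r) <=
      \sum_(2 <= r < m.*2 + 6) (a r + a0 + highi a0 (a r) * (- (1 + 2 * a0))).
    apply: ler_sum_nat => r /andP [r2 rN]; have [? ?] := hin r r2 rN.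
    rewrite mulrN; by apply: fE_ub.
  rewrite sum_lin hsum -hB => hle.
  rewrite leqNgt; apply/negP => hlt.
  have : (m + 2)%:R <= B%:R :> R by rewrite ler_nat (addnS m 1).
  rewrite natrD => h4; nra.
have hAlb : (2 <= A)%N.
  have hS : \sum_(2 <= r < m.*2 + 6) lowi a0 (a r) * (a r - a0) +
         (\sum_(2 <= r < m.*2 + 6) lowi a0 (a r)) * (2 * a0)
      <= \sum_(2 <= r < m.*2 + 6) fE a0 (a r).
    rewrite mulr_suml -big_split; apply: ler_sum_nat => r /andP [r2 rN].
    have [? ?] := hin r r2 rN; by apply: fE_lb2.
  rewrite -hA in hS.
  have hnn : forall r, (2 <= r < m.*2 + 6)%N -> 0 <= lowi a0 (a r) * (a r - a0).
    move=> r /andP [r2 rN]; have [? ?] := hin r r2 rN.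
    rewrite /lowi; case: ifP => _; lra.
  have hS0 : 0 <= \sum_(2 <= r < m.*2 + 6) lowi a0 (a r) * (a r - a0).
    by apply: sum_ge0_nat => r r2 rN; apply: hnn; rewrite r2 rN.
  rewrite leqNgt; apply/negP => hlt.
  have : (A = 0)%N \/ (A = 1)%N by clear -hlt; lia.
  case => hA01.
    rewrite hA01 in hS; lra.
  rewrite hA01 in hS.
  have hz : \sum_(2 <= r < m.*2 + 6) lowi a0 (a r) * (a r - a0) = 0 by lra.
  have : A%:R = 0 :> R.
    rewrite hA big_nat_cond big1 // => r /andP [/andP [r2 rN] _].
    have := psum0 hnn hz (r := r); rewrite r2 rN => /(_ isT).
    have [? ?] := hin r r2 rN.
    rewrite /lowi; case: ifP => _ //; lra.
  by rewrite hA01 => /eqP; rewrite pnatr_eq0.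
split => //.
- by rewrite hAlb hAub.
- rewrite M_eq -/a0 natrB -/A -/B; last by rewrite -addn1. rewrite -hA -hB in hK; lra.
Qed.

Lemma sum_const2 (R : realFieldType) m (c : R) :
  \sum_(2 <= r < m.*2 + 6) c = c * (2 * m%:R + 4).
Proof. by rewrite sumr_const_nat -[LHS]mulr_natr natN. Qed.

Lemma sum_zero2 (R : realFieldType) lo hi (F : nat -> R) :
  (forall r, (lo <= r)%N -> (r < hi)%N -> F r = 0) -> \sum_(lo <= r < hi) F r = 0.
Proof.
move=> h; rewrite big_nat_cond big1 // => r /andP [/andP [? ?] _]; exact: h.
Qed.

Definition midi (R : realFieldType) (a0 x : R) : R :=
  if (- a0 <= x) && (x <= 1 + a0) then 1 else 0.

Lemma sum_part (R : realFieldType) m (a : nat -> R) : - 2^-1 <= a 0%N ->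
  \sum_(2 <= r < m.*2 + 6) lowi (a 0%N) (a r) + \sum_(2 <= r < m.*2 + 6) highi (a 0%N) (a r)
  + \sum_(2 <= r < m.*2 + 6) midi (a 0%N) (a r) = 2 * m%:R + 4.
Proof.
move=> h; rewrite -!big_split /= -[RHS]mul1r -sum_const2.
by apply: eq_big_nat => r _; rewrite /midi partition3.
Qed.

Lemma part_bwd (R : realFieldType) m (a : nat -> R) : admissible m a ->
  cond1 m a \/ cond2 m a \/ cond3 m a -> Efun m a = 0.
Proof.
move=> ha hc; have [h1 [h2 [h3 [hs [hmax hsum]]]]] := ha.
have hm := mono ha.
have k0 : 0 <= m%:R :> R by apply: ler0n.
have hm1 : m.+1%:R = m%:R + 1 :> R by rewrite -addn1 natrD.
have hlo r : (2 <= r)%N -> (r < m.*2 + 6)%N -> a 2%N <= a r.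
  move=> r2 rN; apply: hm => //; exact: lN5.
have hhi r : (2 <= r)%N -> (r < m.*2 + 6)%N -> a r <= a (m.*2 + 5)%N.
  move=> r2 rN; apply: hm => //; exact: lN5.
rewrite /cond1 /cond2 /cond3 in hc.
set a0 := a 0%N in h1 h2 h3 hmax hsum hc *.
case: hc => [[e|e]|[hc|hc]].
- rewrite E_eq -/a0 e sum_zero2 ?mulr0 ?addr0 // => r _ _; exact: fE_zero.
-
  have hlow : - 2^-1 <= a 2%N.
    have : \sum_(2 <= r < m.*2 + 6) a r <= a 2%N + (a 2%N + 1) *+ (m.*2 + 6 - 3).
      rewrite (big_ltn (l26 m)).
      rewrite lerD2l -sumr_const_nat; apply: ler_sum_nat => r /andP [r3 rN].
      by apply: le_trans hmax; apply: hhi; [exact: ltnW|].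
    rewrite l63.
    rewrite -[_ *+ (2 * m + 3)]mulr_natr natrD natrM hsum hm1 => hh.
    case: (lerP (- 2^-1) (a 2%N)) => // hn; exfalso; nra.
  have hup : a (m.*2 + 5)%N <= 3 / 2.
    have : (a (m.*2 + 5)%N - 1) *+ (m.*2 + 5 - 2) + a (m.*2 + 5)%N
        <= \sum_(2 <= r < m.*2 + 6) a r.
      rewrite (addnS _ 5) big_nat_recr /=; last exact: l25.
      rewrite lerD2r -sumr_const_nat; apply: ler_sum_nat => r /andP [r2 rN].
      have hr := l56 rN.
      have := hlo r r2 hr; lra.
    rewrite l52.
    rewrite -[_ *+ (2 * m + 3)]mulr_natr natrD natrM hsum hm1 => hh.
    case: (lerP (a (m.*2 + 5)%N) (3 / 2)) => // hn; exfalso; nra.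
  rewrite E_eq -/a0.
  rewrite (eq_big_nat _ _ (F2 := fun r => a r + a0)); last first.
    move=> r /andP [r2 rN]; apply: fE_half => //.
      have := hlo r r2 rN; lra.
    have := hhi r r2 rN; lra.
  rewrite big_split /= hsum sum_const2 e hm1; lra.
-
  case: hc => hc2 hc3.
  rewrite E_eq -/a0 (big_ltn (l26 m)).
  rewrite fE_first // sum_zero2; first lra.
  move=> r r3 rN; have [? ?] := hc3 r r3 rN; exact: fE_mid0.
-
  case: hc => hin hA hB hM.
  rewrite key_ident // -/a0.
  have := A_eq m a; have := B_eq m a; rewrite -/a0 => <- <-.
  move: hM; rewrite M_eq -/a0 natrB; last by rewrite -addn1.
  move=> ->; lra.
Qed.

Lemma moreA (R : realFieldType) m (a : nat -> R) : admissible m a ->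
  cond3 m a -> cntA m a = (m + 3)%N ->
  forall r : nat, (2 <= r)%N -> (r < m.*2 + 6)%N -> middle a r -> a r = 1 + a 0%N.
Proof.
move=> ha [hin hA hB hM] eA r r2 rN hr.
have [h1 _] := ha.
have hp := sum_part m h1.
rewrite -A_eq -B_eq eA in hp.
move: hM; rewrite M_eq natrB; last by rewrite -addn1.
rewrite eA => hM.
have k0 : 0 <= m%:R :> R by apply: ler0n.
have hm1 : m.+1%:R = m%:R + 1 :> R by rewrite -addn1 natrD.
have hm3 : (m + 3)%:R = m%:R + 3 :> R by rewrite natrD.
set G := fun r => midi (a 0%N) (a r) * (1 + a 0%N) - midv (a 0%N) (a r).
have hG : forall i, (2 <= i < m.*2 + 6)%N -> 0 <= G i.
  move=> i /andP [i2 iN]; rewrite /G /midi /midv.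
  case: ifP => [/andP [_ ?]|_]; lra.
have hS : \sum_(2 <= i < m.*2 + 6) G i = 0.
  rewrite /G sumrB -mulr_suml hM.
  rewrite hm1 hm3 in hp *; set B := (cntB m a)%:R in hp *.
  have -> : \sum_(2 <= i < m.*2 + 6) midi (a 0%N) (a i) = 2 * m%:R + 4 - (m%:R + 3) - B by lra.
  ring.
have := psum0 hG hS (r := r); rewrite r2 rN => /(_ isT).
rewrite /G /midi /midv; move: hr; rewrite /middle => ->; lra.
Qed.

Lemma moreB (R : realFieldType) m (a : nat -> R) : admissible m a ->
  cond3 m a -> cntB m a = (m + 1)%N ->
  forall r : nat, (2 <= r)%N -> (r < m.*2 + 6)%N -> middle a r -> a r = - a 0%N.
Proof.
move=> ha [hin hA hB hM] eB r r2 rN hr.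
have [h1 _] := ha.
have hp := sum_part m h1.
rewrite -A_eq -B_eq eB in hp.
move: hM; rewrite M_eq natrB; last by rewrite -addn1.
rewrite eB => hM.
have hm1' : m.+1%:R = m%:R + 1 :> R by rewrite -addn1 natrD.
have k0 : 0 <= m%:R :> R by apply: ler0n.
have hm1 : (m + 1)%:R = m%:R + 1 :> R by rewrite natrD.
set G := fun r => midv (a 0%N) (a r) + midi (a 0%N) (a r) * a 0%N.
have hG : forall i, (2 <= i < m.*2 + 6)%N -> 0 <= G i.
  move=> i /andP [i2 iN]; rewrite /G /midi /midv.
  case: ifP => [/andP [? _]|_]; lra.
have hS : \sum_(2 <= i < m.*2 + 6) G i = 0.
  rewrite /G big_split -mulr_suml /= hM.
  rewrite hm1 in hp *; set A := (cntA m a)%:R in hp *.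
  have -> : \sum_(2 <= i < m.*2 + 6) midi (a 0%N) (a i) = 2 * m%:R + 4 - A - (m%:R + 1) by lra.
  rewrite ?hm1'; ring.
have := psum0 hG hS (r := r); rewrite r2 rN => /(_ isT).
rewrite /G /midi /midv; move: hr; rewrite /middle => ->; lra.
Qed.


Lemma sum3 (R : realFieldType) lo k1 k2 hi (F : nat -> R) x y z :
  (lo <= k1)%N -> (k1 <= k2)%N -> (k2 <= hi)%N ->
  (forall r, (lo <= r)%N -> (r < k1)%N -> F r = x) ->
  (forall r, (k1 <= r)%N -> (r < k2)%N -> F r = y) ->
  (forall r, (k2 <= r)%N -> (r < hi)%N -> F r = z) ->
  \sum_(lo <= r < hi) F r = x * (k1 - lo)%:R + y * (k2 - k1)%:R + z * (hi - k2)%:R.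
Proof.
move=> h1 h2 h3 f1 f2 f3.
rewrite (big_cat_nat h1 (leq_trans h2 h3)) (big_cat_nat h2 h3) /=.
rewrite (eq_big_nat _ _ (F2 := fun=> x)); last by move=> r /andP [? ?]; apply: f1.
rewrite (eq_big_nat _ _ (F2 := fun=> y) (m := k1)); last by move=> r /andP [? ?]; apply: f2.
rewrite (eq_big_nat _ _ (F2 := fun=> z) (m := k2)); last by move=> r /andP [? ?]; apply: f3.
by rewrite !sumr_const_nat !mulr_natr addrA.
Qed.

Lemma step_mono (R : realFieldType) (k1 k2 : nat) (L mu H : R) r :
  L <= mu -> mu <= H ->
  (if (r < k1)%N then L else if (r < k2)%N then mu else H) <=
  (if (r.+1 < k1)%N then L else if (r.+1 < k2)%N then mu else H).
Proof.
move=> h1 h2.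
case: (ltnP r.+1 k1) => e1.
  by rewrite (ltn_trans (ltnSn r) e1).
case: (ltnP r k1) => e2.
  case: ifP => _; last exact: le_trans h2.
  exact: h1.
case: (ltnP r.+1 k2) => e3.
  by rewrite (ltn_trans (ltnSn r) e3).
case: (ltnP r k2) => e4 //.
Qed.

Lemma step_bounds (R : realFieldType) (k1 k2 : nat) (L mu H : R) r :
  L <= mu -> mu <= H ->
  L <= (if (r < k1)%N then L else if (r < k2)%N then mu else H) /\
  (if (r < k1)%N then L else if (r < k2)%N then mu else H) <= H.
Proof.
move=> h1 h2; case: ifP => _; [split => //; exact: le_trans h2|].
case: ifP => _; split => //; exact: le_trans h2.
Qed.

Lemma natA2 A : (A + 2 - 2 = A)%N. Proof. lia. Qed.
Lemma natM m A B : (A + B <= m.*2 + 4)%N ->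
  (m.*2 + 6 - B - (A + 2) = m.*2 + 4 - (A + B))%N. Proof. lia. Qed.
Lemma natB m B : (B <= m + 1)%N -> (m.*2 + 6 - (m.*2 + 6 - B) = B)%N. Proof. lia. Qed.
Lemma natle1 m A B : (A <= m + 3)%N -> (B <= m + 1)%N -> (A + B <= m.*2 + 4)%N. Proof. lia. Qed.
Lemma natle2 m A B : (A + B <= m.*2 + 4)%N -> (A + 2 <= m.*2 + 6 - B)%N. Proof. lia. Qed.
Lemma natle3 m B : (m.*2 + 6 - B <= m.*2 + 6)%N. Proof. lia. Qed.
Lemma natM0 m A B : (A <= m + 3)%N -> (B <= m + 1)%N -> (m.*2 + 4 - (A + B) = 0)%N ->
  A = (m + 3)%N /\ B = (m + 1)%N. Proof. lia. Qed.
Lemma natMR (R : realFieldType) m A B : (A + B <= m.*2 + 4)%N ->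
  (m.*2 + 4 - (A + B))%:R = 2 * m%:R + 4 - A%:R - B%:R :> R.
Proof.
move=> h; rewrite natrB // !natrD -mul2n natrM; lra.
Qed.
Lemma l55 m r : (r < m.*2 + 5)%N -> (r.+1 < m.*2 + 6)%N. Proof. lia. Qed.

Lemma construct (R : realFieldType) m (a0 : R) (A B : nat) :
  - 2^-1 < a0 -> a0 < 0 -> (2 <= A <= m + 3)%N -> (B <= m + 1)%N ->
  exists a : nat -> R,
    [/\ admissible m a, a 0%N = a0, cond3 m a, cntA m a = A & cntB m a = B].
Proof.
move=> h1 h2 /andP [hA2 hA3] hB.
have hAB := natle1 hA3 hB.
have hAr : 2 <= A%:R :> R by rewrite (ler_nat R 2 A).
have hAk : A%:R <= m%:R + 3 :> R by rewrite (_ : m%:R + 3 = (m + 3)%:R) ?ler_nat // natrD.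
have hBk : B%:R <= m%:R + 1 :> R by rewrite (_ : m%:R + 1 = (m + 1)%:R) ?ler_nat // natrD.
have hBr : 0 <= B%:R :> R by apply: ler0n.
have k0 : 0 <= m%:R :> R by apply: ler0n.
have hm1 : m.+1%:R = m%:R + 1 :> R by rewrite -addn1 natrD.
set c := - a0.
have hcE : c = - a0 by [].
clearbody c.
have hc0 : 0 < c by lra.
have hc1 : c < 2^-1 by lra.
set s := c / (A%:R + B%:R).
have hs1 : s * (A%:R + B%:R) = c.
  by rewrite /s divfK //; apply: lt0r_neq0; lra.
have hs0 : 0 < s by rewrite /s divr_gt0 //; lra.
clearbody s.
set t := (2 * c + B%:R * s) / A%:R.
have ht1 : t * A%:R = 2 * c + B%:R * s.
  by rewrite /t divfK //; apply: lt0r_neq0; lra.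
have hBs : 0 <= B%:R * s by apply: mulr_ge0; lra.
have ht0 : 0 < t by rewrite /t divr_gt0 //; lra.
clearbody t.
have hst : s + t <= 2 * c.
  have hp : 0 <= (A%:R - 2) * c by apply: mulr_ge0; lra.
  have e : (s + t) * A%:R <= (2 * c) * A%:R by lra.
  by rewrite ler_pM2r in e; lra.
set M := (m.*2 + 4 - (A + B))%N.
set S0 : R := (m.+1 - B)%:R + (A%:R - 2 - B%:R) * a0.
have hS0 : S0 = m%:R + 1 - B%:R + (A%:R - 2 - B%:R) * a0.
  rewrite /S0 natrB; [lra | by rewrite -addn1].
have hMr : M%:R = 2 * m%:R + 4 - A%:R - B%:R :> R by rewrite /M natMR.
set mu : R := if M == 0%N then c else S0 / M%:R.
have [hmu1 hmu2 hmu3] : [/\ mu * M%:R = S0, c <= mu & mu <= 1 - c].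
  rewrite /mu; case: eqP => hM0.
    have [eA eB] := natM0 hA3 hB hM0.
    rewrite hS0 hM0 eA eB !natrD; split; lra.
  have hM : 0 < M%:R :> R by rewrite ltr0n lt0n; apply/eqP.
  split.
  - by rewrite divfK //; apply: lt0r_neq0.
  - rewrite ler_pdivlMr // hS0 hMr hcE.
    have : 0 <= (m%:R + 1 - B%:R) * (1 + 2 * a0) by apply: mulr_ge0; lra.
    lra.
  - rewrite ler_pdivrMr // hS0 hMr hcE.
    have : 0 <= (m%:R + 3 - A%:R) * (1 + 2 * a0) by apply: mulr_ge0; lra.
    lra.
clearbody mu.
set L := c - t. set H := 1 - c + s.
have hLE : L = c - t by []. have hHE : H = 1 - c + s by [].
clearbody L H.
have hLmu : L <= mu by lra.
have hmuH : mu <= H by lra.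
pose g r := if (r < A + 2)%N then L else if (r < m.*2 + 6 - B)%N then mu else H.
pose a r := if r == 0%N then a0 else if r == 1%N then - a0 else g r.
have ha r : (2 <= r)%N -> a r = g r by case: r => [|[|r]].
have hgb r := step_bounds (A + 2) (m.*2 + 6 - B) r hLmu hmuH.
exists a.
have hk1 := natle2 hAB.
have hk2 := natle3 m B.
have sum_gen (F : R -> R) :
  \sum_(2 <= r < m.*2 + 6) F (a r) = F L * A%:R + F mu * M%:R + F H * B%:R.
  rewrite (sum3 (x := F L) (y := F mu) (z := F H) (leq_addl A 2) hk1 hk2).
  - by rewrite natA2 natM // natB.
  - by move=> r r2 rA; rewrite ha // /g rA.
  - move=> r r1 r2; rewrite ha; last exact: leq_trans (leq_addl A 2) r1.
    rewrite /g; have -> : (r < A + 2)%N = false by rewrite ltnNge r1.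
    by rewrite r2.
  - move=> r r1 r2; rewrite ha; last exact: leq_trans (leq_addl A 2) (leq_trans hk1 r1).
    rewrite /g; have -> : (r < A + 2)%N = false by rewrite ltnNge (leq_trans hk1 r1).
    have -> : (r < m.*2 + 6 - B)%N = false by rewrite ltnNge r1.
    by [].
have hsumA : \sum_(2 <= r < m.*2 + 6) a r = m.+1%:R.
  rewrite (sum_gen id) /= hmu1 hS0 hm1 hLE hHE.
  have e : (c - t) * A%:R + (1 - c + s) * B%:R = B%:R - (A%:R - 2 - B%:R) * a0.
    rewrite hcE in ht1 *; lra.
  lra.
have hcA : cntA m a = A.
  apply/eqP; rewrite -(eqr_nat R) A_eq (sum_gen (lowi a0)).
  rewrite (_ : lowi a0 L = 1); last by rewrite /lowi; case: (ltrP L (- a0)) => ?; lra.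
  rewrite (_ : lowi a0 mu = 0); last by rewrite /lowi; case: (ltrP mu (- a0)) => ?; lra.
  rewrite (_ : lowi a0 H = 0); last by rewrite /lowi; case: (ltrP H (- a0)) => ?; lra.
  by rewrite mul1r !mul0r !addr0.
have hcB : cntB m a = B.
  apply/eqP; rewrite -(eqr_nat R) B_eq (sum_gen (highi a0)).
  rewrite (_ : highi a0 L = 0); last by rewrite /highi; case: (ltrP (1 + a0) L) => ?; lra.
  rewrite (_ : highi a0 mu = 0); last by rewrite /highi; case: (ltrP (1 + a0) mu) => ?; lra.
  rewrite (_ : highi a0 H = 1); last by rewrite /highi; case: (ltrP (1 + a0) H) => ?; lra.
  by rewrite mul1r !mul0r !add0r.
have ha0 : a 0%N = a0 by [].
split => //.
-
  split; first by rewrite ha0; lra. split; first by rewrite ha0; lra.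
  split; first by [].
  split.
    move=> r r2 r5; rewrite !ha //; last exact: leqW.
    exact: step_mono.
  split => //.
  rewrite !ha //; last exact: l25.
  rewrite {2}/g (_ : (2 < A + 2)%N); last by rewrite addn2 ltnS leqW.
  have [_ e] := hgb (m.*2 + 5)%N; apply: le_trans e _; lra.
-
  split.
  + move=> r r2 rN; rewrite ha0 (ha r r2) /g.
    case: ifP => _; [|case: ifP => _]; split; lra.
  + by rewrite hcA hA2 hA3.
  + by rewrite hcB.
  + rewrite M_eq (sum_gen (midv a0)) hcA hcB.
    rewrite (_ : midv a0 L = 0); last first.
      by rewrite /midv; case: (lerP (- a0) L) => ? //=; lra.
    rewrite (_ : midv a0 H = 0); last first.
      by rewrite /midv; case: (lerP H (1 + a0)) => ? /=; rewrite ?andbF //; lra.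
    rewrite (_ : midv a0 mu = mu); last first.
      rewrite /midv (_ : (- a0 <= mu) && (mu <= 1 + a0)) //.
      by apply/andP; split; lra.
    by rewrite !mul0r addr0 add0r hmu1.
Qed.


Unset Implicit Arguments.

Theorem lemma3p4 (R : realFieldType) (m : nat) :
  (forall a : nat -> R, admissible m a ->
     [/\ Efun m a = 0 <-> (cond1 m a \/ cond2 m a \/ cond3 m a),
         (cond3 m a -> cntA m a = (m + 3)%N ->
            forall r : nat, (2 <= r)%N -> (r < m.*2 + 6)%N -> middle a r ->
              a r = 1 + a 0%N) &
         (cond3 m a -> cntB m a = (m + 1)%N ->
            forall r : nat, (2 <= r)%N -> (r < m.*2 + 6)%N -> middle a r ->
              a r = - a 0%N)]) /\
  (forall (a0 : R) (A B : nat),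
     - 2^-1 < a0 -> a0 < 0 -> (2 <= A <= m + 3)%N -> (B <= m + 1)%N ->
     exists a : nat -> R,
       [/\ admissible m a, a 0%N = a0, cond3 m a, cntA m a = A & cntB m a = B]).
Proof.
split.
- move=> a ha; split.
  + split; [exact: part_fwd ha | exact: part_bwd ha].
  + exact: moreA ha.
  + exact: moreB ha.
- move=> a0 A B h1 h2 hA hB; exact: construct.
Qed.
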